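(* Let $(G_n)_{n\in\mathbb N}$ and $(H_n)_{n\in\mathbb N}$ be sequences of groups and let $(P_n)_{n\in\mathbb N}$ be a partition of $\mathbb N$ into finite sets. If for every $n$ there is an injective homomorphism $\varphi_n:G_n\to *_{i\in P_n}H_i$, then $\mathcal A(G_n)$ embeds in $\mathcal A(H_n)$.
   Context: For a sequence of groups $(G_n)_{n\in\mathbb N}$, an infinite word is a map $w:L\to\bigsqcup_n (G_n\setminus\{1\})$ from a countable linearly ordered set $L$ such that $w^{-1}(G_n)$ is finite for every $n$. Two infinite words are equivalent if for every $m$ their restrictions to the letters from $G_1,\dots,G_m$ represent the same element of $G_1*\cdots*G_m$. The topologist's product $\circledast_n G_n$ is the group of equivalence classes, with multiplication induced by concatenation and inversion by reversing the order and inverting each letter. The free product $*_n G_n$ is the subgroup of classes of finite words. The archipelago group is $\mathcal A(G_n):=\circledast_n G_n/\langle\langle *_n G_n\rangle\rangle$ (quotient by normal closure). *)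

(* Defs.v *)
From Stdlib Require Import List Relations Sorting.Sorted Arith Lia.
Import ListNotations.
Set Implicit Arguments.

Record group := Group {
  gcar :> Type;
  gmul : gcar -> gcar -> gcar;
  ginv : gcar -> gcar;
  gone : gcar;
  gmulA : forall x y z, gmul x (gmul y z) = gmul (gmul x y) z;
  gmul1g : forall x, gmul gone x = x;
  gmulVg : forall x, gmul (ginv x) x = gone }.
Arguments gmul {g}.
Arguments ginv {g}.
Arguments gone g : clear implicits.

Lemma ginv_eq1 (G : group) (x : G) : ginv x = gone G -> x = gone G.
Proof. intro h. pose proof (@gmulVg G x) as e. rewrite h, gmul1g in e. exact e. Qed.

Definition letter (G : nat -> group) := {n : nat & gcar (G n)}.

Unset Implicit Arguments.
Inductive fp_step (G : nat -> group) (S : nat -> Prop) :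
    list (letter G) -> list (letter G) -> Prop :=
| fps_merge u v n (g h : G n) :
    fp_step G S (u ++ existT _ n g :: existT _ n h :: v)
                (u ++ existT _ n (gmul g h) :: v)
| fps_drop u v n : S n ->
    fp_step G S (u ++ existT _ n (gone (G n)) :: v) (u ++ v).
Set Implicit Arguments.

(* Two finite words (with letters from the G n, n in S) represent the same
   element of the free product *_{n in S} G_n. *)
Definition fp_eq (G : nat -> group) (S : nat -> Prop) :
    list (letter G) -> list (letter G) -> Prop :=
  clos_refl_sym_trans _ (fp_step G S).

Record iword (G : nat -> group) := IWord {
  iw_L : Type;
  iw_lt : iw_L -> iw_L -> Prop;
  iw_irrefl : forall x, ~ iw_lt x x;
  iw_trans : forall x y z, iw_lt x y -> iw_lt y z -> iw_lt x z;
  iw_total : forall x y, iw_lt x y \/ x = y \/ iw_lt y x;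
  iw_count : exists f : iw_L -> nat, forall x y, f x = f y -> x = y;
  iw_idx : iw_L -> nat;
  iw_val : forall p, gcar (G (iw_idx p));
  iw_nontriv : forall p, iw_val p <> gone (G (iw_idx p));
  iw_fin : forall n, exists s : list iw_L, forall p, iw_idx p = n -> In p s }.
Arguments iw_lt {G} i _ _.
Arguments iw_idx {G} i _.
Arguments iw_val {G} i _.

Definition iw_letter G (w : iword G) (p : iw_L w) : letter G :=
  existT _ (iw_idx w p) (iw_val w p).

Definition restr G (w : iword G) (m : nat) (s : list (letter G)) : Prop :=
  exists ps : list (iw_L w),
    StronglySorted (iw_lt w) ps /\
    (forall p, In p ps <-> iw_idx w p < m) /\
    s = map (@iw_letter G w) ps.

(* Equivalence of infinite words (equality in the topologist's product) *)
Definition tp_eq G (w w' : iword G) : Prop :=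
  forall m, exists s s', restr w m s /\ restr w' m s' /\
                         fp_eq (fun n => n < m) s s'.

Definition sum_lt A B (ltA : A -> A -> Prop) (ltB : B -> B -> Prop)
  (x y : A + B) : Prop :=
  match x, y with
  | inl a, inl a' => ltA a a'
  | inr b, inr b' => ltB b b'
  | inl _, inr _ => True
  | inr _, inl _ => False
  end.

Section Cat.
Variables (G : nat -> group) (w1 w2 : iword G).

Definition cat_idx (x : iw_L w1 + iw_L w2) : nat :=
  match x with inl a => iw_idx w1 a | inr b => iw_idx w2 b end.
Definition cat_val (x : iw_L w1 + iw_L w2) : gcar (G (cat_idx x)) :=
  match x as x return gcar (G (cat_idx x)) with
  | inl a => iw_val w1 a | inr b => iw_val w2 b end.

Lemma cat_irrefl x : ~ sum_lt (iw_lt w1) (iw_lt w2) x x.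
Proof. destruct x; simpl; apply iw_irrefl. Qed.
Lemma cat_trans x y z : sum_lt (iw_lt w1) (iw_lt w2) x y ->
  sum_lt (iw_lt w1) (iw_lt w2) y z -> sum_lt (iw_lt w1) (iw_lt w2) x z.
Proof. destruct x, y, z; simpl; try tauto; apply iw_trans. Qed.
Lemma cat_total x y : sum_lt (iw_lt w1) (iw_lt w2) x y \/ x = y \/
  sum_lt (iw_lt w1) (iw_lt w2) y x.
Proof.
  destruct x as [a|b], y as [a'|b']; simpl; auto.
  - destruct (iw_total w1 a a') as [h|[h|h]]; subst; auto.
  - destruct (iw_total w2 b b') as [h|[h|h]]; subst; auto.
Qed.
Lemma cat_count : exists f : iw_L w1 + iw_L w2 -> nat,
  forall x y, f x = f y -> x = y.
Proof.
  destruct (iw_count w1) as [f1 h1], (iw_count w2) as [f2 h2].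
  exists (fun x => match x with inl a => 2 * f1 a | inr b => 2 * f2 b + 1 end).
  intros [a|b] [a'|b'] e.
  - f_equal; apply h1; lia.
  - lia.
  - lia.
  - f_equal; apply h2; lia.
Qed.
Lemma cat_nontriv p : cat_val p <> gone (G (cat_idx p)).
Proof. destruct p; apply iw_nontriv. Qed.
Lemma cat_fin n : exists s : list (iw_L w1 + iw_L w2),
  forall p, cat_idx p = n -> In p s.
Proof.
  destruct (iw_fin w1 n) as [s1 h1], (iw_fin w2 n) as [s2 h2].
  exists (map inl s1 ++ map inr s2). intros [a|b] e; simpl in e;
  apply in_or_app; [left|right]; apply in_map; auto.
Qed.

Definition iw_cat : iword G :=
  @IWord G (iw_L w1 + iw_L w2) (sum_lt (iw_lt w1) (iw_lt w2))
    cat_irrefl cat_trans cat_total cat_count cat_idx cat_val cat_nontriv cat_fin.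
End Cat.

Section Inv.
Variables (G : nat -> group) (w : iword G).
Definition inv_lt (x y : iw_L w) : Prop := iw_lt w y x.
Lemma inv_irrefl x : ~ inv_lt x x.
Proof. apply iw_irrefl. Qed.
Lemma inv_trans x y z : inv_lt x y -> inv_lt y z -> inv_lt x z.
Proof. unfold inv_lt; intros; eapply iw_trans; eauto. Qed.
Lemma inv_total x y : inv_lt x y \/ x = y \/ inv_lt y x.
Proof. unfold inv_lt; destruct (iw_total w x y) as [h|[h|h]]; auto. Qed.
Definition inv_val (p : iw_L w) : gcar (G (iw_idx w p)) := ginv (iw_val w p).
Lemma inv_nontriv p : inv_val p <> gone (G (iw_idx w p)).
Proof. intro h. apply (iw_nontriv w p). apply ginv_eq1. exact h. Qed.
Definition iw_inv : iword G :=
  @IWord G (iw_L w) inv_lt inv_irrefl inv_trans inv_total (iw_count w)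
    (iw_idx w) inv_val inv_nontriv (iw_fin w).
End Inv.

Section Empty.
Variable G : nat -> group.
Definition empty_idx (x : Empty_set) : nat := match x with end.
Definition empty_val (x : Empty_set) : gcar (G (empty_idx x)) :=
  match x with end.
Lemma empty_count : exists f : Empty_set -> nat, forall x y, f x = f y -> x = y.
Proof. exists empty_idx. intros []. Qed.
Lemma empty_nontriv (p : Empty_set) : empty_val p <> gone (G (empty_idx p)).
Proof. destruct p. Qed.
Lemma empty_fin (n : nat) : exists s : list Empty_set,
  forall p : Empty_set, empty_idx p = n -> In p s.
Proof. exists nil. intros []. Qed.
Lemma empty_irrefl (x : Empty_set) : ~ False.
Proof. auto. Qed.
Lemma empty_trans (x y z : Empty_set) : False -> False -> False.
Proof. auto. Qed.
Lemma empty_total (x y : Empty_set) : False \/ x = y \/ False.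
Proof. destruct x. Qed.
Definition iw_empty : iword G :=
  @IWord G Empty_set (fun _ _ => False) empty_irrefl empty_trans empty_total
    empty_count empty_idx empty_val empty_nontriv empty_fin.
End Empty.

(* classes of finite words = the free product *_n G_n inside the topologist's
   product *)
Definition is_finite_word G (w : iword G) : Prop :=
  exists s : list (iw_L w), forall p, In p s.

Fixpoint conj_prod G (l : list (iword G * iword G)) : iword G :=
  match l with
  | [] => iw_empty G
  | (g, f) :: l' => iw_cat (iw_cat (iw_cat g f) (iw_inv g)) (conj_prod l')
  end.

(* the class of w lies in the normal closure of *_n G_n *)
Definition in_ncl G (w : iword G) : Prop :=
  exists l : list (iword G * iword G),
    Forall (fun gf => is_finite_word (snd gf)) l /\ tp_eq w (conj_prod l).

(* equality in the archipelago group A(G_n) *)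
Definition arch_eq G (w w' : iword G) : Prop := in_ncl (iw_cat w (iw_inv w')).

(* A(G_n) embeds in A(H_n): an injective group homomorphism, given on
   representatives *)
Definition arch_embeds (G H : nat -> group) : Prop :=
  exists f : iword G -> iword H,
    (forall w w', arch_eq w w' -> arch_eq (f w) (f w')) /\
    (forall w w', arch_eq (f (iw_cat w w')) (iw_cat (f w) (f w'))) /\
    (forall w w', arch_eq (f w) (f w') -> arch_eq w w').

Definition finite_partition (P : nat -> list nat) : Prop :=
  (forall n, P n <> []) /\ (forall i, exists! n, In i (P n)).

(* phi is an injective homomorphism G0 -> *_{i in S} H_i, given on
   representatives (finite words with letters from H_i, i in S) *)
Definition inj_hom_to_fp (G0 : group) (H : nat -> group) (S : nat -> Prop)
  (phi : G0 -> list (letter H)) : Prop :=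
  (forall x, Forall (fun l => S (projT1 l)) (phi x)) /\
  (forall x y, fp_eq S (phi (gmul x y)) (phi x ++ phi y)) /\
  (forall x y, fp_eq S (phi x) (phi y) -> x = y).

(* Main.v *)
Require Import Defs.
From Stdlib Require Import List Relations Sorting.Sorted Arith Lia Cantor ClassicalEpsilon ProofIrrelevance Eqdep_dec Bool Classical.
Import ListNotations.
Set Implicit Arguments.

Definition bdec (P : Prop) : bool := if excluded_middle_informative P then true else false.
Lemma bdecT (P : Prop) : bdec P = true <-> P.
Proof. unfold bdec; destruct (excluded_middle_informative P); split; intros; auto; discriminate || contradiction. Qed.
Lemma bdecF (P : Prop) : bdec P = false <-> ~ P.
Proof. unfold bdec; destruct (excluded_middle_informative P); split; intros; auto; discriminate || contradiction. Qed.

Section GroupLemmas.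
Variable K : group.
Lemma mulg1 (x : K) : gmul x (gone K) = x.
Proof.
  assert (h : forall y : K, gmul (ginv (ginv y)) (ginv y) = gone K) by (intro; apply gmulVg).
  assert (e: forall y : K, gmul y (ginv y) = gone K).
  { intro y. rewrite <- (gmul1g _ (gmul y (ginv y))).
    rewrite <- (gmulVg _ (ginv y)) at 1.
    rewrite <- gmulA, (gmulA _ (ginv y) y), gmulVg, gmul1g. apply gmulVg. }
  rewrite <- (gmulVg _ x), gmulA, e, gmul1g. reflexivity.
Qed.
Lemma mulgV (x : K) : gmul x (ginv x) = gone K.
Proof.
  rewrite <- (gmul1g _ (gmul x (ginv x))).
  rewrite <- (gmulVg _ (ginv x)) at 1.
  rewrite <- gmulA, (gmulA _ (ginv x) x), gmulVg, gmul1g. apply gmulVg.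
Qed.
Lemma mulg_cancel (x y z : K) : gmul x y = gmul x z -> y = z.
Proof. intro e. rewrite <- (gmul1g _ y), <- (gmul1g _ z), <- (gmulVg _ x), <- !gmulA, e. reflexivity. Qed.
Lemma invMg (x y : K) : ginv (gmul x y) = gmul (ginv y) (ginv x).
Proof.
  apply (mulg_cancel (gmul x y)). rewrite mulgV.
  rewrite gmulA, <- (gmulA _ x y), mulgV, mulg1, mulgV. reflexivity.
Qed.
Lemma inv1 : ginv (gone K) = gone K.
Proof. rewrite <- (mulg1 (ginv (gone K))). apply gmulVg. Qed.
End GroupLemmas.

Section Words.
Variable K : nat -> group.
Implicit Types s t u : list (letter K).
Definition linv (l : letter K) : letter K := existT _ (projT1 l) (ginv (projT2 l)).
Definition winv (s : list (letter K)) : list (letter K) := rev (map linv s).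
Lemma winv_app s t : winv (s ++ t) = winv t ++ winv s.
Proof. unfold winv. rewrite map_app, rev_app_distr. reflexivity. Qed.
Lemma winv_cons x s : winv (x :: s) = winv s ++ [linv x].
Proof. reflexivity. Qed.
Lemma winv_nil : winv [] = []. Proof. reflexivity. Qed.

Definition filt (q : nat -> bool) (s : list (letter K)) := filter (fun l => q (projT1 l)) s.
Lemma filt_app q s t : filt q (s ++ t) = filt q s ++ filt q t.
Proof. apply filter_app. Qed.
Lemma filt_winv q s : filt q (winv s) = winv (filt q s).
Proof.
  induction s as [|x s IH]; [reflexivity|].
  rewrite winv_cons, filt_app, IH. unfold filt at 2 3. simpl filter.
  destruct (q (projT1 x)) eqn:e; simpl; rewrite ?e.
  - rewrite winv_cons. reflexivity.
  - rewrite app_nil_r. reflexivity.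
Qed.
Lemma filt_filt q r s : filt q (filt r s) = filt (fun n => q n && r n) s.
Proof. unfold filt in *. induction s as [|x s IH]; [reflexivity|]. simpl. destruct (r (projT1 x)) eqn:e1; destruct (q (projT1 x)) eqn:e2; simpl; rewrite ?e1, ?e2, ?IH; reflexivity. Qed.
Lemma filt_ext q r s : (forall x, In x s -> q (projT1 x) = r (projT1 x)) -> filt q s = filt r s.
Proof. unfold filt. intro h. induction s as [|x s IH]; [reflexivity|]. simpl. rewrite h by (left; auto). rewrite IH by (intros; apply h; right; auto). reflexivity. Qed.
Lemma filt_all q s : (forall x, In x s -> q (projT1 x) = true) -> filt q s = s.
Proof. unfold filt. intro h. induction s as [|x s IH]; [reflexivity|]. simpl. rewrite h by (left; auto). rewrite IH by (intros; apply h; right; auto). reflexivity. Qed.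
Lemma filt_none q s : (forall x, In x s -> q (projT1 x) = false) -> filt q s = [].
Proof. unfold filt. intro h. induction s as [|x s IH]; [reflexivity|]. simpl. rewrite h by (left; auto). apply IH. intros; apply h; right; auto. Qed.
Lemma in_filt q x s : In x (filt q s) -> In x s /\ q (projT1 x) = true.
Proof. unfold filt. rewrite filter_In. auto. Qed.
Lemma in_winv x s : In x (winv s) -> exists y, In y s /\ projT1 y = projT1 x.
Proof. unfold winv. rewrite <- in_rev, in_map_iff. intros [y [<- h]]. exists y; auto. Qed.

Lemma step_ctx S s t (x y : list (letter K)) : fp_step K S s t -> fp_step K S (x ++ s ++ y) (x ++ t ++ y).
Proof.
  intro h; destruct h.
  - rewrite !app_assoc. rewrite <- !(app_assoc (x ++ u)). cbn. constructor.
  - rewrite !app_assoc. rewrite <- !(app_assoc (x ++ u)). cbn. rewrite !app_assoc.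
    rewrite <- (app_assoc (x++u)). constructor. auto.
Qed.
Lemma fp_refl S s : fp_eq S s s. Proof. apply rst_refl. Qed.
Lemma fp_sym S s t : fp_eq S s t -> fp_eq S t s. Proof. apply rst_sym. Qed.
Lemma fp_trans S s t u : fp_eq S s t -> fp_eq S t u -> fp_eq S s u. Proof. apply rst_trans. Qed.
Lemma fp_ctx S s t (x y : list (letter K)) : fp_eq S s t -> fp_eq S (x ++ s ++ y) (x ++ t ++ y).
Proof.
  induction 1.
  - apply rst_step. apply step_ctx; auto.
  - apply fp_refl.
  - apply fp_sym; auto.
  - eapply fp_trans; eauto.
Qed.
Lemma fp_app S s (s' : list (letter K)) t (t' : list (letter K)) : fp_eq S s s' -> fp_eq S t t' -> fp_eq S (s ++ t) (s' ++ t').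
Proof.
  intros h1 h2. apply fp_trans with (s' ++ t).
  - pose proof (fp_ctx [] t h1) as h. cbn in h. exact h.
  - pose proof (fp_ctx s' [] h2) as h. rewrite !app_nil_r in h. exact h.
Qed.
Lemma fp_mono (S S' : nat -> Prop) s t : (forall n, S n -> S' n) -> fp_eq S s t -> fp_eq S' s t.
Proof.
  intros hS. induction 1.
  - apply rst_step. destruct H; constructor; auto.
  - apply fp_refl.
  - apply fp_sym; auto.
  - eapply fp_trans; eauto.
Qed.
Lemma letter_eta (x : letter K) : x = existT _ (projT1 x) (projT2 x).
Proof. destruct x; reflexivity. Qed.

Lemma fp_cancel_r S s : Forall (fun l => S (projT1 l)) s -> fp_eq S (s ++ winv s) [].
Proof.
  induction s as [|x s IH]; intro hf; [apply fp_refl|]. inversion hf; subst.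
  rewrite winv_cons, app_assoc. destruct x as [n g].
  change (fp_eq S ([existT _ n g] ++ (s ++ winv s) ++ [existT _ n (ginv g)]) []).
  apply fp_trans with ([existT _ n g] ++ [] ++ [existT _ n (ginv g)]).
  { apply fp_ctx. auto. }
  cbn. apply fp_trans with ([] ++ existT _ n (gmul g (ginv g)) :: []).
  { apply rst_step. apply (fps_merge K S [] [] n g (ginv g)). }
  rewrite mulgV. apply rst_step. apply (fps_drop K S [] [] n). auto.
Qed.
Lemma winv_invol s : winv (winv s) = s.
Proof.
  unfold winv. rewrite map_rev, rev_involutive, map_map.
  induction s as [|[n g] s IH]; cbn; [reflexivity|]. f_equal; auto.
  unfold linv; cbn. f_equal. apply (@mulg_cancel _ (ginv g)). rewrite gmulVg, mulgV. reflexivity.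
Qed.
Lemma Forall_winv (Q : nat -> Prop) s : Forall (fun l => Q (projT1 l)) s -> Forall (fun l => Q (projT1 l)) (winv s).
Proof. intro h. unfold winv. apply Forall_rev. apply Forall_map. eapply Forall_impl; [|exact h]. cbn. auto. Qed.
Lemma fp_cancel_l S s : Forall (fun l => S (projT1 l)) s -> fp_eq S (winv s ++ s) [].
Proof.
  intro h. rewrite <- (winv_invol s) at 2. apply fp_cancel_r. apply Forall_winv. auto.
Qed.

Lemma step_winv S s t : fp_step K S s t -> fp_step K S (winv s) (winv t).
Proof.
  intro h; destruct h.
  - rewrite !winv_app, !winv_cons. rewrite <- !app_assoc. cbn.
    unfold linv; cbn. rewrite invMg. apply fps_merge.
  - rewrite !winv_app, winv_cons. rewrite <- app_assoc. cbn. unfold linv; cbn. rewrite inv1. constructor; auto.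
Qed.
Lemma fp_winv S s t : fp_eq S s t -> fp_eq S (winv s) (winv t).
Proof.
  induction 1.
  - apply rst_step, step_winv; auto.
  - apply fp_refl.
  - apply fp_sym; auto.
  - eapply fp_trans; eauto.
Qed.

Lemma step_filt S q s t : fp_step K S s t ->
  fp_eq (fun n => S n /\ q n = true) (filt q s) (filt q t).
Proof.
  intro h; destruct h; rewrite !filt_app; cbn.
  - destruct (q n) eqn:e; cbn; [|apply fp_refl].
    apply rst_step. apply fps_merge.
  - destruct (q n) eqn:e; cbn; [|apply fp_refl]. apply rst_step. constructor. auto.
Qed.
Lemma fp_filt S q s t : fp_eq S s t -> fp_eq (fun n => S n /\ q n = true) (filt q s) (filt q t).
Proof.
  induction 1.
  - apply step_filt; auto.
  - apply fp_refl.
  - apply fp_sym; auto.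
  - eapply fp_trans; eauto.
Qed.
End Words.


Section NF.
Variable K : nat -> group.
Implicit Types s t w : list (letter K).

Definition nontriv (x : letter K) : Prop := projT2 x <> gone (K (projT1 x)).
Definition hdneq (x : letter K) w : Prop :=
  match w with [] => True | y :: _ => projT1 x <> projT1 y end.
Fixpoint red w : Prop :=
  match w with [] => True | x :: w' => nontriv x /\ hdneq x w' /\ red w' end.

Definition act (x : letter K) w : list (letter K) :=
  match w with
  | [] => if excluded_middle_informative (projT2 x = gone _) then [] else [x]
  | y :: w' =>
     match Nat.eq_dec (projT1 y) (projT1 x) with
     | left e =>
        if excluded_middle_informative
             (gmul (projT2 x) (eq_rect _ (fun n => gcar (K n)) (projT2 y) _ e) = gone _)
        then w'
        else existT _ (projT1 x) (gmul (projT2 x) (eq_rect _ (fun n => gcar (K n)) (projT2 y) _ e)) :: w'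
     | right _ => if excluded_middle_informative (projT2 x = gone _) then w else x :: w
     end
  end.

Lemma act_same n (g h : K n) w :
  act (existT _ n g) (existT _ n h :: w) =
  if excluded_middle_informative (gmul g h = gone (K n)) then w
  else existT _ n (gmul g h) :: w.
Proof.
  unfold act; cbn [projT1 projT2]. destruct (Nat.eq_dec n n) as [e|e]; [|congruence].
  rewrite (UIP_refl_nat n e). reflexivity.
Qed.
Lemma act_nohead n (g : K n) w :
  hdneq (existT _ n g) w ->
  act (existT _ n g) w =
  if excluded_middle_informative (g = gone (K n)) then w else existT _ n g :: w.
Proof.
  destruct w as [|[m h] w]; [reflexivity|]. intro hne. cbn in hne. unfold act; cbn [projT1 projT2].
  destruct (Nat.eq_dec m n) as [e|e]; [congruence|reflexivity].
Qed.

Lemma red_cons_inv x w : red (x :: w) -> nontriv x /\ hdneq x w /\ red w.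
Proof. auto. Qed.

Lemma act_red x w : red w -> red (act x w).
Proof.
  destruct x as [n g]. intro hw.
  destruct w as [|[m h] w].
  - cbn. destruct (excluded_middle_informative _); cbn; auto.
  - destruct (Nat.eq_dec m n) as [e|e].
    + subst m. rewrite act_same. destruct hw as [h1 [h2 h3]].
      destruct (excluded_middle_informative _) as [E|E]; auto.
      cbn. refine (conj E (conj _ h3)). destruct w as [|[k z] w]; cbn in *; auto.
    + rewrite act_nohead by (cbn; congruence).
      destruct (excluded_middle_informative _) as [E|E]; auto.
      cbn. refine (conj E (conj _ hw)). cbn. congruence.
Qed.

Lemma act_merge n (g h : K n) w : red w ->
  act (existT _ n g) (act (existT _ n h) w) = act (existT _ n (gmul g h)) w.
Proof.
  intro hw.
  assert (gen : forall w', hdneq (existT _ n h) w' ->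
     act (existT _ n g) (act (existT _ n h) w') = act (existT _ n (gmul g h)) w').
  { intros w' hd. rewrite (act_nohead _ h w' hd).
    rewrite (act_nohead _ (gmul g h) w') by (destruct w' as [|[]]; cbn in *; auto).
    destruct (excluded_middle_informative (h = gone (K n))) as [E|E].
    - subst h. rewrite mulg1. rewrite (act_nohead _ g w') by (destruct w' as [|[]]; cbn in *; auto). reflexivity.
    - rewrite act_same. reflexivity. }
  destruct w as [|[m k] w]; [apply gen; exact I|].
  destruct (Nat.eq_dec m n) as [e|e]; [|apply gen; cbn; congruence].
  subst m. destruct hw as [h1 [h2 h3]].
  rewrite act_same, act_same.
  destruct (excluded_middle_informative (gmul h k = gone (K n))) as [E|E].
  - rewrite act_nohead by (destruct w as [|[]]; cbn in *; auto).
    rewrite <- gmulA, E, mulg1. reflexivity.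
  - rewrite act_same, gmulA. reflexivity.
Qed.

Lemma act_one n w : red w -> act (existT _ n (gone (K n))) w = w.
Proof.
  intro hw. destruct w as [|[m k] w].
  - cbn. destruct (excluded_middle_informative _); congruence.
  - destruct (Nat.eq_dec m n) as [e|e].
    + subst m. rewrite act_same. rewrite gmul1g. destruct hw as [h1 _].
      destruct (excluded_middle_informative _) as [E|E]; [contradiction|reflexivity].
    + rewrite act_nohead by (cbn; congruence).
      destruct (excluded_middle_informative _); congruence.
Qed.

Definition NF s := fold_right act [] s.
Lemma NF_red s : red (NF s).
Proof. induction s; cbn; auto. apply act_red; auto. Qed.
Lemma NF_app s t : NF (s ++ t) = fold_right act (NF t) s.
Proof. unfold NF. apply fold_right_app. Qed.
Lemma fold_act_red s w w' : w = w' -> fold_right act w s = fold_right act w' s.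
Proof. intros ->; auto. Qed.

Lemma NF_step S s t : fp_step K S s t -> NF s = NF t.
Proof.
  intro h; destruct h; rewrite !NF_app; apply fold_act_red; cbn.
  - apply act_merge. apply NF_red.
  - apply act_one. apply NF_red.
Qed.
Lemma NF_eq S s t : fp_eq S s t -> NF s = NF t.
Proof.
  induction 1; auto.
  - eapply NF_step; eauto.
  - congruence.
Qed.
Lemma red_NF w : red w -> NF w = w.
Proof.
  induction w as [|x w IH]; [reflexivity|]. intros [h1 [h2 h3]].
  change (act x (NF w) = x :: w). rewrite IH by auto. destruct x as [n g].
  rewrite act_nohead by auto.
  destruct (excluded_middle_informative _); [contradiction|reflexivity].
Qed.

Lemma act_fp S x w : S (projT1 x) -> red w -> fp_eq S (x :: w) (act x w).
Proof.
  destruct x as [n g]; cbn. intros hS hw.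
  assert (gen : hdneq (existT _ n g) w -> fp_eq S (existT _ n g :: w) (act (existT _ n g) w)).
  { intro hd. rewrite act_nohead by auto.
    destruct (excluded_middle_informative _) as [E|E]; [|apply fp_refl].
    subst g. apply rst_step. apply (fps_drop K S [] w n). auto. }
  destruct w as [|[m k] w]; [apply gen; exact I|].
  destruct (Nat.eq_dec m n) as [e|e]; [|apply gen; cbn; congruence].
  subst m. rewrite act_same.
  apply fp_trans with (existT _ n (gmul g k) :: w).
  { apply rst_step. apply (fps_merge K S [] w n g k). }
  destruct (excluded_middle_informative _) as [E|E]; [|apply fp_refl].
  rewrite E. apply rst_step. apply (fps_drop K S [] w n). auto.
Qed.

Lemma NF_fp S s : Forall (fun l => S (projT1 l)) s -> fp_eq S s (NF s).
Proof.
  induction s as [|x s IH]; intro hf; [apply fp_refl|]. inversion hf; subst.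
  cbn. apply fp_trans with (x :: NF s).
  - apply (fp_app (s:=[x]) (s':=[x])); [apply fp_refl|auto].
  - apply act_fp; auto. apply NF_red.
Qed.

Lemma act_support (Q : nat -> Prop) x w : Q (projT1 x) -> Forall (fun l => Q (projT1 l)) w ->
  Forall (fun l => Q (projT1 l)) (act x w).
Proof.
  destruct x as [n g]; cbn. intros hq hw.
  destruct w as [|[m k] w].
  - cbn. destruct (excluded_middle_informative _); auto.
  - inversion hw; subst. destruct (Nat.eq_dec m n) as [e|e].
    + subst m. rewrite act_same. destruct (excluded_middle_informative _); auto.
    + rewrite act_nohead by (cbn; congruence). destruct (excluded_middle_informative _); auto.
Qed.
Lemma NF_support (Q : nat -> Prop) s : Forall (fun l => Q (projT1 l)) s -> Forall (fun l => Q (projT1 l)) (NF s).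
Proof.
  induction s; intro h; cbn; auto. inversion h; subst. apply act_support; auto.
Qed.

Lemma red_app s t : red s -> red t -> (forall x, In x s -> hdneq x t) -> red (s ++ t).
Proof.
  induction s as [|x s IH]; cbn; auto. intros [h1 [h2 h3]] ht hx.
  refine (conj h1 (conj _ _)).
  - destruct s; cbn; [apply hx; auto | exact h2].
  - apply IH; auto.
Qed.
End NF.


Definition TT : nat -> Prop := fun _ => True.

Section Psi.
Variables (G H : nat -> group) (P : nat -> list nat) (phi : forall n, G n -> list (letter H)).
Hypothesis hP : finite_partition P.
Hypothesis hphi : forall n, @inj_hom_to_fp (G n) H (fun i => In i (P n)) (phi n).

Lemma part_uniq i n n' : In i (P n) -> In i (P n') -> n = n'.
Proof.
  intros h1 h2. destruct hP as [_ hu]. destruct (hu i) as [k [_ hk]].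
  rewrite <- (hk n h1), <- (hk n' h2). reflexivity.
Qed.

Definition nontrivb (y : letter H) : bool := negb (bdec (projT2 y = gone (H (projT1 y)))).
Definition psi (l : letter G) : list (letter H) := filter nontrivb (phi (projT1 l) (projT2 l)).
Definition Psi (s : list (letter G)) : list (letter H) := flat_map psi s.

Lemma Psi_app s t : Psi (s ++ t) = Psi s ++ Psi t.
Proof. apply flat_map_app. Qed.

Lemma phi_supp n g : Forall (fun l => In (projT1 l) (P n)) (phi n g).
Proof. destruct (hphi n) as [h _]. apply h. Qed.
Lemma psi_supp l : Forall (fun y => In (projT1 y) (P (projT1 l))) (psi l).
Proof. unfold psi. pose proof (phi_supp (projT1 l) (projT2 l)) as h. rewrite Forall_forall in *.
  intros y hy. apply filter_In in hy. apply h, hy. Qed.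
Lemma psi_nontriv l y : In y (psi l) -> nontriv y.
Proof.
  unfold psi. rewrite filter_In. intros [_ h]. unfold nontrivb in h.
  apply negb_true_iff in h. apply bdecF in h. exact h.
Qed.

Lemma fp_filter_nontriv (S : nat -> Prop) l : Forall (fun y => S (projT1 y)) l -> fp_eq S l (filter nontrivb l).
Proof.
  induction l as [|x l IH]; intro hf; [apply fp_refl|]. inversion hf; subst.
  cbn. destruct (nontrivb x) eqn:e.
  - apply (fp_app (s:=[x]) (s':=[x])); [apply fp_refl|auto].
  - unfold nontrivb in e. apply negb_false_iff in e. apply (proj1 (bdecT _)) in e.
    apply fp_trans with l; [|auto]. destruct x as [n g]. cbn in e. subst g.
    apply rst_step. apply (fps_drop H S [] l n). auto.
Qed.

Lemma phi_hom n (g h : G n) : fp_eq (fun i => In i (P n)) (phi n (gmul g h)) (phi n g ++ phi n h).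
Proof. destruct (hphi n) as [_ [h1 _]]. apply h1. Qed.

Lemma phi_one n : fp_eq (fun i => In i (P n)) (phi n (gone (G n))) [].
Proof.
  set (S := fun i => In i (P n)). set (a := phi n (gone (G n))).
  assert (e : fp_eq S a (a ++ a)).
  { unfold a. pattern (gone (G n)) at 1. rewrite <- (gmul1g _ (gone (G n))). apply phi_hom. }
  apply fp_trans with (winv a ++ a ++ a).
  - apply fp_trans with ([] ++ a); [apply fp_refl|].
    rewrite app_assoc. apply fp_app; [|apply fp_refl]. apply fp_sym. apply fp_cancel_l. apply phi_supp.
  - apply fp_trans with (winv a ++ a); [|apply fp_cancel_l; apply phi_supp].
    apply fp_app; [apply fp_refl|]. apply fp_sym; auto.
Qed.

Lemma psi_phi n (g : G n) : fp_eq (fun i => In i (P n)) (psi (existT _ n g)) (phi n g).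
Proof. apply fp_sym. apply fp_filter_nontriv. apply phi_supp. Qed.

Lemma phi_inv n (g : G n) : fp_eq (fun i => In i (P n)) (phi n (ginv g)) (winv (phi n g)).
Proof.
  set (S := fun i => In i (P n)).
  assert (e : fp_eq S (phi n (ginv g) ++ phi n g) []).
  { apply fp_trans with (phi n (gmul (ginv g) g)); [apply fp_sym, phi_hom|].
    rewrite gmulVg. apply phi_one. }
  apply fp_trans with ((phi n (ginv g) ++ phi n g) ++ winv (phi n g)).
  - rewrite <- app_assoc. apply fp_trans with (phi n (ginv g) ++ []); [rewrite app_nil_r; apply fp_refl|].
    apply fp_app; [apply fp_refl|]. apply fp_sym, fp_cancel_r, phi_supp.
  - apply (fp_app (s':=[])); [exact e|apply fp_refl].
Qed.

Lemma mono_TT (S : nat -> Prop) (s t : list (letter H)) : fp_eq S s t -> fp_eq TT s t.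
Proof. apply fp_mono. unfold TT; auto. Qed.

Lemma psi_inv l : fp_eq TT (psi (linv l)) (winv (psi l)).
Proof.
  destruct l as [n g]. unfold linv; cbn [projT1 projT2].
  apply mono_TT with (S := fun i => In i (P n)).
  eapply fp_trans; [apply psi_phi|]. eapply fp_trans; [apply phi_inv|].
  apply fp_winv. apply fp_sym, psi_phi.
Qed.

Lemma Psi_winv s : fp_eq TT (Psi (winv s)) (winv (Psi s)).
Proof.
  induction s as [|x s IH]; [apply fp_refl|].
  rewrite winv_cons, Psi_app. unfold Psi at 3. cbn [flat_map]. rewrite winv_app.
  apply fp_app; auto. cbn. rewrite app_nil_r. apply psi_inv.
Qed.

Lemma Psi_step S s t : fp_step G S s t -> fp_eq TT (Psi s) (Psi t).
Proof.
  intro h; destruct h; rewrite !Psi_app; apply fp_app; try apply fp_refl;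
  unfold Psi; cbn [flat_map].
  - rewrite app_assoc. apply fp_app; [|apply fp_refl].
    apply mono_TT with (S := fun i => In i (P n)). apply fp_sym.
    eapply fp_trans; [apply psi_phi|]. eapply fp_trans; [apply phi_hom|].
    apply fp_app; apply fp_sym, psi_phi.
  - apply fp_trans with ([] ++ flat_map psi v); [|apply fp_refl]. apply fp_app; [|apply fp_refl].
    apply mono_TT with (S := fun i => In i (P n)).
    eapply fp_trans; [apply psi_phi|]. apply phi_one.
Qed.
Lemma Psi_fp S s t : fp_eq S s t -> fp_eq TT (Psi s) (Psi t).
Proof.
  induction 1.
  - eapply Psi_step; eauto.
  - apply fp_refl.
  - apply fp_sym; auto.
  - eapply fp_trans; eauto.
Qed.

Lemma filt_Psi (q : nat -> bool) (q' : nat -> bool) s :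
  (forall n i, In i (P n) -> q i = q' n) -> filt q (Psi s) = Psi (filt q' s).
Proof.
  intro hq. induction s as [|x s IH]; [reflexivity|].
  unfold Psi in *. cbn [flat_map]. rewrite filt_app, IH.
  change (filt q' (x :: s)) with (if q' (projT1 x) then x :: filt q' s else filt q' s).
  destruct (q' (projT1 x)) eqn:e.
  - cbn [flat_map]. f_equal. apply filt_all. intros y hy.
    pose proof (psi_supp x) as hs. rewrite Forall_forall in hs. rewrite (hq _ _ (hs y hy)). exact e.
  - rewrite filt_none; [reflexivity|]. intros y hy.
    pose proof (psi_supp x) as hs. rewrite Forall_forall in hs. rewrite (hq _ _ (hs y hy)). exact e.
Qed.

Definition rho (l : letter G) : list (letter H) := NF (psi l).

Lemma rho_supp l : Forall (fun y => In (projT1 y) (P (projT1 l))) (rho l).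
Proof. apply (NF_support (fun i => In i (P (projT1 l)))). apply psi_supp. Qed.

Lemma rho_nonempty l : nontriv l -> rho l <> [].
Proof.
  destruct l as [n g]. unfold nontriv; cbn. intros hg he. apply hg.
  destruct (hphi n) as [_ [_ hinj]]. apply hinj.
  eapply fp_trans; [apply fp_sym, psi_phi|].
  eapply fp_trans; [apply NF_fp, (psi_supp (existT _ n g))|]. fold (rho (existT _ n g)). rewrite he.
  apply fp_sym, phi_one.
Qed.

Lemma rho_red (r : list (letter G)) : red r -> red (flat_map rho r) /\ (r <> [] -> exists y t, flat_map rho r = y :: t /\ In (projT1 y) (P (projT1 (hd (existT _ 0 (gone (G 0))) r)))).
Proof.
  induction r as [|x r IH]; cbn [flat_map].
  - split; [exact I|]. congruence.
  - intros [h1 [h2 h3]]. destruct (IH h3) as [IHa IHb].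
    pose proof (rho_nonempty h1) as hne. pose proof (rho_supp x) as hs.
    split.
    + apply red_app; auto. apply NF_red.
      intros y hy. destruct r as [|z r]; [destruct (flat_map rho []) eqn:E; cbn in E; [exact I|discriminate]|].
      destruct IHb as [y' [t [E hin]]]; [congruence|]. rewrite E. cbn in hin |- *.
      rewrite Forall_forall in hs. intro eq. apply h2. cbn.
      apply (part_uniq (projT1 y)); auto. rewrite eq; auto.
    + intros _. destruct (rho x) as [|y t] eqn:E; [congruence|].
      exists y, (t ++ flat_map rho r). split; [reflexivity|]. cbn.
      rewrite Forall_forall in hs. apply hs. left; auto.
Qed.

Lemma rho_Psi r : fp_eq TT (flat_map rho r) (Psi r).
Proof.
  unfold Psi. induction r as [|x r IH]; [apply fp_refl|]. cbn [flat_map].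
  apply fp_app; auto. apply mono_TT with (S := fun i => In i (P (projT1 x))).
  apply fp_sym, NF_fp, psi_supp.
Qed.

Lemma Psi_inj (S T : nat -> Prop) s : Forall (fun l => S (projT1 l)) s ->
  fp_eq T (Psi s) [] -> fp_eq S s [].
Proof.
  intros hs hT. set (r := NF s).
  assert (e1 : fp_eq S s r) by (apply NF_fp; auto).
  enough (r = []) by (rewrite <- H0; auto).
  assert (e2 : fp_eq TT (flat_map rho r) []).
  { apply fp_trans with (Psi r).
    - apply rho_Psi.
    - apply fp_trans with (Psi s). apply fp_sym; eapply Psi_fp; eauto.
      eapply mono_TT; eauto. }
  apply NF_eq in e2. destruct (@rho_red r (NF_red s)) as [hr hne].
  fold r in hr, hne. rewrite red_NF in e2 by auto. cbn in e2.
  destruct r as [|x r']; auto. destruct hne as [y [t [E _]]]; congruence.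
Qed.
End Psi.


Section SS.
Variables (A B : Type) (R : A -> A -> Prop).
Lemma SS_app (l1 l2 : list A) : StronglySorted R l1 -> StronglySorted R l2 ->
  (forall x y, In x l1 -> In y l2 -> R x y) -> StronglySorted R (l1 ++ l2).
Proof.
  induction l1 as [|x l1 IH]; cbn; auto. intros h1 h2 h. apply StronglySorted_inv in h1 as [h1a h1b].
  constructor; [apply IH; auto|]. apply Forall_app. split; auto.
  apply Forall_forall. intros; apply h; auto.
Qed.
Lemma SS_map (f : B -> A) (l : list B) : StronglySorted R (map f l) -> StronglySorted (fun a b => R (f a) (f b)) l.
Proof.
  induction l as [|x l IH]; cbn; intro h; constructor; apply StronglySorted_inv in h as [h1 h2]; auto.
  rewrite Forall_map in h2. exact h2.
Qed.
Lemma SS_map' (f : B -> A) (l : list B) : StronglySorted (fun a b => R (f a) (f b)) l -> StronglySorted R (map f l).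
Proof.
  induction l as [|x l IH]; cbn; intro h; constructor; apply StronglySorted_inv in h as [h1 h2]; auto.
  rewrite Forall_map. exact h2.
Qed.
Lemma SS_filter (q : A -> bool) l : StronglySorted R l -> StronglySorted R (filter q l).
Proof.
  induction l as [|x l IH]; cbn; intro h; auto. apply StronglySorted_inv in h as [h1 h2].
  destruct (q x); auto. constructor; auto. rewrite Forall_forall in *. intros y hy. apply filter_In in hy. apply h2, hy.
Qed.
End SS.
Lemma SS_rev A (R : A -> A -> Prop) (l : list A) : StronglySorted R l -> StronglySorted (fun a b => R b a) (rev l).
Proof.
  induction l as [|x l IH]; cbn; intro h; [constructor|]. apply StronglySorted_inv in h as [h1 h2].
  apply SS_app; auto. constructor; constructor.
  intros a b ha hb. destruct hb as [<-|[]]. rewrite <- in_rev in ha. rewrite Forall_forall in h2. auto.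
Qed.

Section Pos.
Variable G : nat -> group.
Implicit Types w : iword G.

Definition sorted_pos w m (ps : list (iw_L w)) : Prop :=
  StronglySorted (iw_lt w) ps /\ (forall p, In p ps <-> iw_idx w p < m).

Lemma ins_sorted w (x : iw_L w) ps : StronglySorted (iw_lt w) ps -> ~ In x ps ->
  exists ps', StronglySorted (iw_lt w) ps' /\ forall y, In y ps' <-> y = x \/ In y ps.
Proof.
  induction ps as [|y ps IH]; intros hs hn.
  - exists [x]. split; [repeat constructor|]. intro y; cbn; intuition.
  - apply StronglySorted_inv in hs as [hs1 hs2]. destruct (iw_total w x y) as [h|[h|h]].
    + exists (x :: y :: ps). split.
      * constructor; [constructor; auto|]. constructor; auto. rewrite Forall_forall in *.
        intros z hz. eapply iw_trans; eauto.
      * intro z; cbn; intuition.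
    + subst; exfalso; apply hn; left; auto.
    + destruct IH as [ps' [h1 h2]]; auto. { intro; apply hn; right; auto. }
      exists (y :: ps'). split.
      * constructor; auto. rewrite Forall_forall in *. intros z hz. apply h2 in hz as [->|hz]; auto.
      * intro z; cbn. rewrite h2. intuition.
Qed.

Lemma sort_exists w (Q : iw_L w -> Prop) (l : list (iw_L w)) :
  exists ps, StronglySorted (iw_lt w) ps /\ forall p, In p ps <-> In p l /\ Q p.
Proof.
  induction l as [|x l IH].
  - exists []. split; [constructor|]. cbn; tauto.
  - destruct IH as [ps [h1 h2]].
    destruct (classic (Q x /\ ~ In x ps)) as [[hq hn]|hc].
    + destruct (ins_sorted w x h1 hn) as [ps' [h3 h4]]. exists ps'. split; auto.
      intro p. rewrite h4, h2. cbn. intuition; subst; auto.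
    + exists ps. split; auto. intro p. rewrite h2. cbn. split; [tauto|].
      intros [[e|hp] hq].
      * subst p. destruct (classic (In x ps)) as [hi|hi]; [apply h2 in hi; tauto| exfalso; apply hc; auto].
      * tauto.
Qed.

Lemma sp_exists w m : exists ps, sorted_pos w m ps.
Proof.
  assert (hl : exists l : list (iw_L w), forall p, iw_idx w p < m -> In p l).
  { induction m as [|m IH].
    - exists []. intros; lia.
    - destruct IH as [l hl]. destruct (iw_fin w m) as [s hs]. exists (s ++ l).
      intros p hp. apply in_or_app. destruct (Nat.eq_dec (iw_idx w p) m); [left; auto|right; apply hl; lia]. }
  destruct hl as [l hl]. destruct (sort_exists w (fun p => iw_idx w p < m) l) as [ps [h1 h2]].
  exists ps. split; auto. intro p. rewrite h2. intuition.
Qed.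

Lemma ss_unique w (ps ps' : list (iw_L w)) : StronglySorted (iw_lt w) ps -> StronglySorted (iw_lt w) ps' ->
  (forall p, In p ps <-> In p ps') -> ps = ps'.
Proof.
  revert ps'. induction ps as [|x ps IH]; intros ps' h1 h2 h.
  - destruct ps' as [|y ps']; auto. exfalso. apply (proj2 (h y)). left; auto.
  - destruct ps' as [|y ps']. { exfalso. apply (proj1 (h x)). left; auto. }
    apply StronglySorted_inv in h1 as [h1a h1b]. apply StronglySorted_inv in h2 as [h2a h2b].
    rewrite Forall_forall in h1b, h2b.
    assert (exy : x = y).
    { destruct (proj1 (h x) (or_introl eq_refl)) as [e|hx]; auto.
      destruct (proj2 (h y) (or_introl eq_refl)) as [e|hy]; auto.
      exfalso. apply (iw_irrefl w x). eapply iw_trans; [apply h1b; exact hy|apply h2b; exact hx]. }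
    subst y. f_equal. apply IH; auto. intro p. split; intro hp.
    + destruct (proj1 (h p) (or_intror hp)) as [e|e]; auto. subst. exfalso. eapply iw_irrefl, h1b; eauto.
    + destruct (proj2 (h p) (or_intror hp)) as [e|e]; auto. subst. exfalso. eapply iw_irrefl, h2b; eauto.
Qed.

Lemma sp_unique w m ps ps' : sorted_pos w m ps -> sorted_pos w m ps' -> ps = ps'.
Proof.
  intros [h1 h2] [h3 h4]. apply ss_unique; auto. intro p. rewrite h2, h4. tauto.
Qed.

Definition PSW w m : list (iw_L w) := proj1_sig (constructive_indefinite_description _ (sp_exists w m)).
Lemma PSW_sp w m : sorted_pos w m (PSW w m).
Proof. unfold PSW. destruct (constructive_indefinite_description _ _); auto. Qed.
Lemma PSW_eq w m ps : sorted_pos w m ps -> PSW w m = ps.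
Proof. intro h. eapply sp_unique; [apply PSW_sp|exact h]. Qed.
Lemma PSW_in w m p : In p (PSW w m) <-> iw_idx w p < m.
Proof. apply (PSW_sp w m). Qed.

Definition LW w m : list (letter G) := map (iw_letter w) (PSW w m).

Lemma restr_LW w m s : restr w m s -> s = LW w m.
Proof. intros [ps [h1 [h2 ->]]]. unfold LW. rewrite (@PSW_eq w m ps); auto. split; auto. Qed.
Lemma LW_restr w m : restr w m (LW w m).
Proof. exists (PSW w m). destruct (PSW_sp w m). auto. Qed.

Lemma tp_eq_iff w w' : tp_eq w w' <-> forall m, fp_eq (fun n => n < m) (LW w m) (LW w' m).
Proof.
  split.
  - intros h m. destruct (h m) as [s [s' [h1 [h2 h3]]]].
    rewrite <- (restr_LW h1), <- (restr_LW h2). auto.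
  - intros h m. exists (LW w m), (LW w' m). repeat split; auto; apply LW_restr.
Qed.

Lemma LW_lt w m : Forall (fun l => projT1 l < m) (LW w m).
Proof.
  unfold LW. apply Forall_map. apply Forall_forall. intros p hp. apply PSW_in in hp. exact hp.
Qed.

Lemma PSW_mono w m M : m <= M -> PSW w m = filter (fun p => iw_idx w p <? m) (PSW w M).
Proof.
  intro hm. apply PSW_eq. split.
  - apply SS_filter. apply PSW_sp.
  - intro p. rewrite filter_In, PSW_in, Nat.ltb_lt. lia.
Qed.
Lemma LW_mono w m M : m <= M -> LW w m = filt (fun n => n <? m) (LW w M).
Proof.
  intro hm. unfold LW, filt. rewrite (PSW_mono w hm). rewrite filter_map_swap. reflexivity.
Qed.

Section Sub.
Variables (w : iword G) (P : iw_L w -> Prop).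
Definition sub_lt (x y : sig P) : Prop := iw_lt w (proj1_sig x) (proj1_sig y).
Lemma sub_irrefl x : ~ sub_lt x x. Proof. apply iw_irrefl. Qed.
Lemma sub_trans x y z : sub_lt x y -> sub_lt y z -> sub_lt x z. Proof. apply iw_trans. Qed.
Lemma sig_inj (x y : sig P) : proj1_sig x = proj1_sig y -> x = y.
Proof. destruct x, y; cbn; intro e; subst. f_equal. apply proof_irrelevance. Qed.
Lemma sub_total x y : sub_lt x y \/ x = y \/ sub_lt y x.
Proof. unfold sub_lt. destruct (iw_total w (proj1_sig x) (proj1_sig y)) as [h|[h|h]]; auto. right; left; apply sig_inj; auto. Qed.
Lemma sub_count : exists f : sig P -> nat, forall x y, f x = f y -> x = y.
Proof. destruct (iw_count w) as [f hf]. exists (fun x => f (proj1_sig x)). intros x y e. apply sig_inj, hf, e. Qed.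
Definition sub_idx (x : sig P) : nat := iw_idx w (proj1_sig x).
Definition sub_val (x : sig P) : gcar (G (sub_idx x)) := iw_val w (proj1_sig x).
Lemma sub_nontriv x : sub_val x <> gone (G (sub_idx x)). Proof. apply iw_nontriv. Qed.

Fixpoint lift (l : list (iw_L w)) : list (sig P) :=
  match l with
  | [] => []
  | x :: l' => match excluded_middle_informative (P x) with
               | left h => exist P x h :: lift l'
               | right _ => lift l' end
  end.
Lemma lift_map l : map (@proj1_sig _ _) (lift l) = filter (fun p => bdec (P p)) l.
Proof.
  induction l as [|x l IH]; cbn; auto. unfold bdec.
  destruct (excluded_middle_informative (P x)); cbn; f_equal; auto.
Qed.
Lemma lift_in l x : In x (lift l) <-> In (proj1_sig x) l.
Proof.
  induction l as [|y l IH]; cbn; [tauto|].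
  destruct (excluded_middle_informative (P y)) as [h|h]; cbn; rewrite IH.
  - split; intros [e|e]; auto; left; [subst; auto|apply sig_inj; auto].
  - split; auto. intros [e|e]; auto. exfalso; apply h. rewrite e. apply proj2_sig.
Qed.
Lemma sub_fin n : exists s : list (sig P), forall p, sub_idx p = n -> In p s.
Proof. destruct (iw_fin w n) as [s hs]. exists (lift s). intros p e. apply lift_in. apply hs, e. Qed.

Definition iw_sub : iword G :=
  @IWord G (sig P) sub_lt sub_irrefl sub_trans sub_total sub_count sub_idx sub_val sub_nontriv sub_fin.

Lemma PSW_sub m : PSW iw_sub m = lift (PSW w m).
Proof.
  apply PSW_eq. split.
  - change (StronglySorted (fun a b : sig P => iw_lt w (proj1_sig a) (proj1_sig b)) (lift (PSW w m))).
    apply SS_map. rewrite lift_map. apply SS_filter, PSW_sp.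
  - intro p. rewrite lift_in, PSW_in. reflexivity.
Qed.
Lemma LW_sub m : LW iw_sub m = map (iw_letter w) (filter (fun p => bdec (P p)) (PSW w m)).
Proof.
  unfold LW. rewrite PSW_sub, <- lift_map, map_map. reflexivity.
Qed.
End Sub.

Lemma LW_cat w1 w2 m : LW (iw_cat w1 w2) m = LW w1 m ++ LW w2 m.
Proof.
  unfold LW. rewrite (@PSW_eq (iw_cat w1 w2) m (map inl (PSW w1 m) ++ map inr (PSW w2 m))).
  - rewrite map_app, !map_map. reflexivity.
  - split.
    + apply SS_app.
      * apply SS_map'. apply PSW_sp.
      * apply SS_map'. apply PSW_sp.
      * intros x y hx hy. apply in_map_iff in hx as [a [<- _]]. apply in_map_iff in hy as [b [<- _]]. exact I.
    + intros [a|b]; rewrite in_app_iff, !in_map_iff; cbn.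
      * rewrite <- PSW_in. split; [intros [[a' [e h]]|[b' [e h]]]; [congruence|discriminate]|].
        intro h; left; eauto.
      * rewrite <- PSW_in. split; [intros [[a' [e h]]|[b' [e h]]]; [discriminate|congruence]|].
        intro h; right; eauto.
Qed.

Lemma LW_inv w m : LW (iw_inv w) m = winv (LW w m).
Proof.
  unfold LW. rewrite (@PSW_eq (iw_inv w) m (rev (PSW w m))).
  - unfold winv. rewrite map_rev, map_map. reflexivity.
  - split.
    + apply (SS_rev (R := iw_lt w)). apply PSW_sp.
    + intro p. rewrite <- in_rev. exact (PSW_in w m p).
Qed.

Lemma LW_empty m : LW (iw_empty G) m = [].
Proof.
  unfold LW. rewrite (@PSW_eq (iw_empty G) m []); auto. split; [constructor|]. intros [].
Qed.

Lemma LW_conj g f l m : LW (conj_prod ((g, f) :: l)) m =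
  ((LW g m ++ LW f m) ++ winv (LW g m)) ++ LW (conj_prod l) m.
Proof. cbn [conj_prod]. rewrite !LW_cat, LW_inv. reflexivity. Qed.

End Pos.


Lemma filter_true A (f : A -> bool) l : (forall x, In x l -> f x = true) -> filter f l = l.
Proof. induction l as [|x l IH]; cbn; intros h; auto. rewrite h by auto. f_equal; auto. Qed.
Lemma filter_false A (f : A -> bool) l : (forall x, In x l -> f x = false) -> filter f l = [].
Proof. induction l as [|x l IH]; cbn; intros h; auto. rewrite h by auto. auto. Qed.
Lemma filter_filter_sub A (f g : A -> bool) l : (forall x, f x = true -> g x = true) -> filter f (filter g l) = filter f l.
Proof.
  induction l as [|x l IH]; cbn; intros h; auto.
  destruct (g x) eqn:e; cbn; [destruct (f x); [f_equal|]; auto|].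
  destruct (f x) eqn:e'; auto. rewrite h in e; auto. discriminate.
Qed.
Lemma filter_length_lt A (f : A -> bool) l a : In a l -> f a = false -> length (filter f l) < length l.
Proof.
  induction l as [|x l IH]; cbn; [tauto|]. intros [<-|h] e.
  - rewrite e. pose proof (filter_length_le f l). lia.
  - destruct (f x); cbn; [specialize (IH h e); lia|]. pose proof (filter_length_le f l). lia.
Qed.

Section NCL.
Variable G : nat -> group.
Implicit Types v w : iword G.

Definition qge (N : nat) : nat -> bool := fun n => N <=? n.
Definition TrivN N v : Prop := forall m, @fp_eq G (fun n => n < m) (filt (qge N) (LW v m)) [].

Lemma filt_LW w (q : nat -> bool) (ps : list (iw_L w)) :
  filt q (map (iw_letter w) ps) = map (iw_letter w) (filter (fun p => q (iw_idx w p)) ps).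
Proof. unfold filt. rewrite filter_map_swap. reflexivity. Qed.

Lemma Forall_sub_lt w m (f : iw_L w -> bool) :
  Forall (fun l => projT1 l < m) (map (iw_letter w) (filter f (PSW w m))).
Proof.
  apply Forall_map, Forall_forall. intros p hp. apply filter_In in hp as [hp _]. apply PSW_in in hp. exact hp.
Qed.

Lemma Forall_filt_lt m (q : nat -> bool) (s : list (letter G)) :
  Forall (fun l => projT1 l < m) s -> Forall (fun l => projT1 l < m) (filt q s).
Proof. intro h. rewrite Forall_forall in *. intros x hx. apply in_filt in hx. apply h, hx. Qed.

Lemma finite_bound w : is_finite_word w -> exists N, forall p, iw_idx w p < N.
Proof.
  intros [s hs]. exists (S (list_max (map (iw_idx w) s))). intro p.
  assert (h : iw_idx w p <= list_max (map (iw_idx w) s)).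
  { pose proof (proj1 (list_max_le (map (iw_idx w) s) _) (le_n _)) as hf.
    rewrite Forall_forall in hf. apply hf, in_map, hs. }
  lia.
Qed.

Lemma finite_bounds (l : list (iword G * iword G)) : Forall (fun gf => is_finite_word (snd gf)) l ->
  exists N, forall gf, In gf l -> forall p, iw_idx (snd gf) p < N.
Proof.
  induction l as [|gf l IH]; intro h.
  - exists 0. intros _ [].
  - inversion h; subst. destruct (IH H2) as [N1 h1]. destruct (finite_bound H1) as [N2 h2].
    exists (N1 + N2). intros gf' [<-|hi] p; [specialize (h2 p)|specialize (h1 _ hi p)]; lia.
Qed.

Lemma triv_conj l N : (forall gf, In gf l -> forall p, iw_idx (snd gf) p < N) ->
  forall m, @fp_eq G (fun n => n < m) (filt (qge N) (LW (conj_prod l) m)) [].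
Proof.
  intros hb m. induction l as [|[g f] l IH].
  - cbn [conj_prod]. rewrite LW_empty. apply fp_refl.
  - rewrite LW_conj, !filt_app, filt_winv.
    rewrite (filt_none (qge N) (LW f m)).
    2:{ intros x hx. unfold LW in hx. apply in_map_iff in hx as [p [<- _]].
        specialize (hb _ (or_introl eq_refl) p). cbn in hb. unfold qge. cbn. apply Nat.leb_gt. exact hb. }
    rewrite app_nil_r. apply fp_trans with ([] ++ filt (qge N) (LW (conj_prod l) m)).
    + apply fp_app; [|apply fp_refl]. apply fp_cancel_r. apply Forall_filt_lt. apply LW_lt.
    + apply IH. intros; apply hb; right; auto.
Qed.

Lemma ncl_triv v : in_ncl v -> exists N, TrivN N v.
Proof.
  intros [l [hl htp]]. destruct (finite_bounds hl) as [N hN]. exists N. intro m.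
  rewrite tp_eq_iff in htp. specialize (htp m).
  apply fp_trans with (filt (qge N) (LW (conj_prod l) m)).
  - eapply fp_mono; [|apply fp_filt; exact htp]. cbn; tauto.
  - apply triv_conj; auto.
Qed.

Section Split.
Variable w : iword G.
Lemma split3 (ps : list (iw_L w)) a : StronglySorted (iw_lt w) ps ->
  ps = filter (fun p => bdec (iw_lt w p a)) ps ++ filter (fun p => bdec (p = a)) ps ++ filter (fun p => bdec (iw_lt w a p)) ps
  /\ filter (fun p => bdec (p <> a)) ps = filter (fun p => bdec (iw_lt w p a)) ps ++ filter (fun p => bdec (iw_lt w a p)) ps.
Proof.
  induction ps as [|x ps IH]; intro hs; [cbn; auto|].
  apply StronglySorted_inv in hs as [hs1 hs2]. rewrite Forall_forall in hs2.
  destruct (IH hs1) as [IH1 IH2]. cbn [filter].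
  destruct (iw_total w x a) as [h|[h|h]].
  - rewrite (proj2 (bdecT (iw_lt w x a)) h).
    rewrite (proj2 (bdecF (x = a))) by (intro e; subst; eapply iw_irrefl; eauto).
    rewrite (proj2 (bdecF (iw_lt w a x))) by (intro e; eapply iw_irrefl, iw_trans; eauto).
    rewrite (proj2 (bdecT (x <> a))) by (intro e; subst; eapply iw_irrefl; eauto).
    cbn. split; [f_equal; auto|f_equal; auto].
  - subst x. rewrite (proj2 (bdecF (iw_lt w a a))) by apply iw_irrefl.
    rewrite (proj2 (bdecT (a = a))) by auto. rewrite (proj2 (bdecF (a <> a))) by auto.
    rewrite (filter_false (fun p => bdec (iw_lt w p a)) ps).
    2:{ intros y hy. apply bdecF. intro e. eapply iw_irrefl, iw_trans; [apply hs2; exact hy|exact e]. }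
    rewrite (filter_false (fun p => bdec (p = a)) ps).
    2:{ intros y hy. apply bdecF. intro e. subst. eapply iw_irrefl, hs2; eauto. }
    rewrite (filter_true (fun p => bdec (iw_lt w a p)) ps).
    2:{ intros y hy. apply bdecT. auto. }
    rewrite (filter_true (fun p => bdec (p <> a)) ps).
    2:{ intros y hy. apply bdecT. intro e; subst. eapply iw_irrefl, hs2; eauto. }
    cbn. auto.
  - rewrite (proj2 (bdecF (iw_lt w x a))) by (intro e; eapply iw_irrefl, iw_trans; eauto).
    rewrite (proj2 (bdecF (x = a))) by (intro e; subst; eapply iw_irrefl; eauto).
    rewrite (proj2 (bdecT (iw_lt w a x))) by auto.
    rewrite (proj2 (bdecT (x <> a))) by (intro e; subst; eapply iw_irrefl; eauto).
    rewrite (filter_false (fun p => bdec (iw_lt w p a)) ps).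
    2:{ intros y hy. apply bdecF. intro e. eapply iw_irrefl, iw_trans; [|exact h]. eapply iw_trans; [apply hs2; exact hy|exact e]. }
    rewrite (filter_false (fun p => bdec (p = a)) ps).
    2:{ intros y hy. apply bdecF. intro e. subst. eapply iw_irrefl, iw_trans; [exact h|apply hs2; eauto]. }
    rewrite (filter_true (fun p => bdec (iw_lt w a p)) ps).
    2:{ intros y hy. apply bdecT. eapply iw_trans; [exact h|apply hs2; auto]. }
    rewrite (filter_true (fun p => bdec (p <> a)) ps).
    2:{ intros y hy. apply bdecT. intro e; subst. eapply iw_irrefl, iw_trans; [exact h|apply hs2; eauto]. }
    cbn. auto.
Qed.
End Split.

Lemma triv_ncl_k N k : forall v, length (PSW v N) <= k -> TrivN N v -> in_ncl v.
Proof.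
  induction k as [|k IH]; intros v hk ht.
  all: destruct (PSW v N) as [|a rest] eqn:E.
  2: { cbn in hk; lia. }
  1,2: try (
    exists []; split; [constructor|]; apply tp_eq_iff; intro m; cbn [conj_prod]; rewrite LW_empty;
    specialize (ht m); rewrite filt_all in ht; [exact ht|];
    intros x hx; unfold LW in hx; apply in_map_iff in hx as [p [<- _]]; unfold qge; cbn;
    apply Nat.leb_le; destruct (Nat.lt_ge_cases (iw_idx v p) N) as [h|h]; [|exact h];
    apply PSW_in in h; rewrite E in h; destruct h).
  set (c := iw_sub v (fun p => iw_lt v p a)).
  set (A := iw_sub v (fun p : iw_L v => p = a)).
  set (v' := iw_sub v (fun p : iw_L v => p <> a)).
  assert (ha : iw_idx v a < N) by (apply PSW_in; rewrite E; left; auto).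
  assert (hk' : length (PSW v' N) <= k).
  { unfold v'. rewrite PSW_sub.
    rewrite <- (length_map (@proj1_sig _ (fun p : iw_L v => p <> a)) (lift v _ _)), lift_map.
    assert (length (filter (fun p => bdec (p <> a)) (PSW v N)) < length (PSW v N)); [|rewrite E in *; cbn in *; lia].
    apply filter_length_lt with a. rewrite E; left; auto. apply bdecF. tauto. }
  assert (ht' : TrivN N v').
  { intro m. specialize (ht m). unfold v'. rewrite LW_sub, filt_LW.
    rewrite filter_filter_sub.
    - unfold LW in ht. rewrite filt_LW in ht. exact ht.
    - intros p hp. apply bdecT. intro e; subst. unfold qge in hp. apply Nat.leb_le in hp. lia. }
  destruct (IH v' hk' ht') as [l' [hl' htp']].
  exists ((c, A) :: l'). split.
  - constructor; auto. cbn. exists [exist (fun p : iw_L v => p = a) a eq_refl]. intro p. left. apply sig_inj. cbn.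
    symmetry. apply (proj2_sig p).
  - apply tp_eq_iff. intro m. rewrite LW_conj. rewrite tp_eq_iff in htp'. specialize (htp' m).
    unfold c, A. rewrite !LW_sub.
    unfold v' in htp'. rewrite LW_sub in htp'.
    destruct (split3 v a (proj1 (PSW_sp v m))) as [e1 e2]. rewrite e2, map_app in htp'.
    set (X := map (iw_letter v) (filter (fun p => bdec (iw_lt v p a)) (PSW v m))) in *.
    set (Y := map (iw_letter v) (filter (fun p => bdec (p = a)) (PSW v m))).
    set (Z := map (iw_letter v) (filter (fun p => bdec (iw_lt v a p)) (PSW v m))) in *.
    replace (LW v m) with (X ++ Y ++ Z) by (unfold LW; rewrite e1 at 1; rewrite !map_app; reflexivity).
    apply fp_trans with (((X ++ Y) ++ winv X) ++ (X ++ Z)); [|apply fp_app; [apply fp_refl|exact htp']].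
    replace (((X ++ Y) ++ winv X) ++ X ++ Z) with ((X ++ Y) ++ (winv X ++ X) ++ Z) by (rewrite !app_assoc; reflexivity).
    apply fp_sym. apply fp_trans with ((X ++ Y) ++ [] ++ Z).
    + apply fp_ctx. apply fp_cancel_l. apply Forall_sub_lt.
    + rewrite <- app_assoc. apply fp_refl.
Qed.

Lemma triv_ncl N v : TrivN N v -> in_ncl v.
Proof. intro h. eapply triv_ncl_k; [apply le_n|exact h]. Qed.

End NCL.


Section LiftG.
Variables (X : Type) (Q : X -> Prop).
Fixpoint liftg (l : list X) : list (sig Q) :=
  match l with
  | [] => []
  | x :: l' => match excluded_middle_informative (Q x) with
               | left h => exist Q x h :: liftg l'
               | right _ => liftg l' end
  end.
Lemma liftg_map l : map (@proj1_sig _ _) (liftg l) = filter (fun p => bdec (Q p)) l.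
Proof.
  induction l as [|x l IH]; cbn; auto. unfold bdec.
  destruct (excluded_middle_informative (Q x)); cbn; f_equal; auto.
Qed.
Lemma sigQ_inj (x y : sig Q) : proj1_sig x = proj1_sig y -> x = y.
Proof. destruct x, y; cbn; intro e; subst. f_equal. apply proof_irrelevance. Qed.
Lemma liftg_in l x : In x (liftg l) <-> In (proj1_sig x) l.
Proof.
  induction l as [|y l IH]; cbn; [tauto|].
  destruct (excluded_middle_informative (Q y)) as [h|h]; cbn; rewrite IH.
  - split; intros [e|e]; auto; left; [subst; auto|apply sigQ_inj; auto].
  - split; auto. intros [e|e]; auto. exfalso; apply h. rewrite e. apply proj2_sig.
Qed.
End LiftG.

Lemma SS_seq s L : StronglySorted lt (seq s L).
Proof.
  revert s; induction L as [|L IH]; intro s; cbn; constructor; auto.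
  apply Forall_forall. intros x hx. apply in_seq in hx. lia.
Qed.
Lemma SS_mono A (R R' : A -> A -> Prop) l : (forall x y, R x y -> R' x y) -> StronglySorted R l -> StronglySorted R' l.
Proof.
  intros h. induction 1; constructor; auto. eapply Forall_impl; [|eauto]. auto.
Qed.
Lemma map_nth_seq A (l : list A) d : map (fun k => nth k l d) (seq 0 (length l)) = l.
Proof.
  induction l as [|x l IH]; cbn; auto. f_equal. rewrite <- seq_shift, map_map. cbn. exact IH.
Qed.

Section FW.
Variables (G H : nat -> group) (P : nat -> list nat) (phi : forall n, G n -> list (letter H)).
Hypothesis hP : finite_partition P.
Hypothesis hphi : forall n, @inj_hom_to_fp (G n) H (fun i => In i (P n)) (phi n).
Variable w : iword G.

Notation psi := (psi phi).
Notation Psi := (Psi phi).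
Definition len (p : iw_L w) : nat := length (psi (iw_letter w p)).
Definition dflt : letter H := existT (fun n => gcar (H n)) 0 (gone (H 0)).
Definition rawletter (x : iw_L w * nat) : letter H := nth (snd x) (psi (iw_letter w (fst x))) dflt.
Definition Pfw (x : iw_L w * nat) : Prop := snd x < len (fst x).
Definition lex (a b : iw_L w * nat) : Prop := iw_lt w (fst a) (fst b) \/ (fst a = fst b /\ snd a < snd b).
Definition fw_lt (x y : sig Pfw) : Prop := lex (proj1_sig x) (proj1_sig y).
Lemma fw_irrefl x : ~ fw_lt x x.
Proof. unfold fw_lt, lex. intros [h|[_ h]]; [eapply iw_irrefl; eauto|lia]. Qed.
Lemma fw_trans x y z : fw_lt x y -> fw_lt y z -> fw_lt x z.
Proof.
  unfold fw_lt, lex. intros [h1|[e1 h1]] [h2|[e2 h2]].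
  - left; eapply iw_trans; eauto.
  - left; rewrite <- e2; auto.
  - left; rewrite e1; auto.
  - right; split; [congruence|lia].
Qed.
Lemma fw_total x y : fw_lt x y \/ x = y \/ fw_lt y x.
Proof.
  unfold fw_lt, lex. destruct x as [[p k] hx], y as [[p' k'] hy]; cbn.
  destruct (iw_total w p p') as [h|[h|h]]; auto. subst p'.
  destruct (Nat.lt_trichotomy k k') as [h|[h|h]]; auto.
  subst k'. right; left. apply sigQ_inj. reflexivity.
Qed.
Lemma fw_count : exists f : sig Pfw -> nat, forall x y, f x = f y -> x = y.
Proof.
  destruct (iw_count w) as [f hf].
  exists (fun x => Cantor.to_nat (f (fst (proj1_sig x)), snd (proj1_sig x))).
  intros [[p k] hx] [[p' k'] hy] e; cbn [proj1_sig fst snd] in e. apply to_nat_inj in e. injection e; intros e2 e1.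
  apply hf in e1. subst. apply sigQ_inj. reflexivity.
Qed.
Definition fw_idx (x : sig Pfw) : nat := projT1 (rawletter (proj1_sig x)).
Definition fw_val (x : sig Pfw) : gcar (H (fw_idx x)) := projT2 (rawletter (proj1_sig x)).
Lemma rawletter_in (x : iw_L w * nat) : Pfw x -> In (rawletter x) (psi (iw_letter w (fst x))).
Proof. intro h. apply nth_In. exact h. Qed.
Lemma fw_nontriv x : fw_val x <> gone (H (fw_idx x)).
Proof. apply (psi_nontriv phi (iw_letter w (fst (proj1_sig x))) (rawletter (proj1_sig x))). apply rawletter_in, proj2_sig. Qed.

Definition raw (ps : list (iw_L w)) : list (iw_L w * nat) := flat_map (fun p => map (pair p) (seq 0 (len p))) ps.

Lemma raw_in ps x : Pfw x -> In (fst x) ps -> In x (raw ps).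
Proof.
  destruct x as [p k]. unfold Pfw; cbn. intros h hp. unfold raw. apply in_flat_map. exists p. split; auto.
  apply in_map. apply in_seq. lia.
Qed.
Lemma rawidx_supp x : Pfw x -> In (projT1 (rawletter x)) (P (iw_idx w (fst x))).
Proof.
  intro h. pose proof (psi_supp G P phi hphi (iw_letter w (fst x))) as hs. rewrite Forall_forall in hs.
  apply hs, rawletter_in, h.
Qed.

Lemma fw_fin n : exists s : list (sig Pfw), forall p, fw_idx p = n -> In p s.
Proof.
  destruct hP as [_ hu]. destruct (hu n) as [k [hk _]].
  destruct (iw_fin w k) as [s hs]. exists (liftg Pfw (raw s)). intros x e. apply liftg_in.
  apply raw_in; [apply proj2_sig|]. apply hs.
  apply (part_uniq hP n); [|exact hk]. rewrite <- e. apply rawidx_supp, proj2_sig.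
Qed.

Definition FW : iword H :=
  @IWord H (sig Pfw) fw_lt fw_irrefl fw_trans fw_total fw_count fw_idx fw_val fw_nontriv fw_fin.

Lemma raw_SS ps : StronglySorted (iw_lt w) ps -> StronglySorted lex (raw ps).
Proof.
  induction ps as [|p ps IH]; intro h; [constructor|]. apply StronglySorted_inv in h as [h1 h2].
  cbn. apply SS_app; auto.
  - apply SS_map'. eapply SS_mono; [|apply SS_seq]. intros a b hab. right; cbn; auto.
  - intros x y hx hy. apply in_map_iff in hx as [k [<- _]]. unfold raw in hy. apply in_flat_map in hy as [p' [hp' hy]].
    apply in_map_iff in hy as [k' [<- _]]. left. cbn. rewrite Forall_forall in h2. auto.
Qed.

Lemma rawletter_raw ps : map rawletter (raw ps) = Psi (map (iw_letter w) ps).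
Proof.
  induction ps as [|p ps IH]; auto.
  change (raw (p :: ps)) with (map (pair p) (seq 0 (len p)) ++ raw ps).
  change (Psi (map (iw_letter w) (p :: ps))) with (psi (iw_letter w p) ++ Psi (map (iw_letter w) ps)).
  rewrite map_app, IH. f_equal.
  rewrite map_map. unfold rawletter; cbn. unfold len. apply map_nth_seq.
Qed.

Lemma LW_FW m M : (forall n i, In i (P n) -> i < m -> n < M) ->
  LW FW m = filt (fun i => i <? m) (Psi (LW w M)).
Proof.
  intro hM.
  set (l0 := filter (fun x => projT1 (rawletter x) <? m) (raw (PSW w M))).
  assert (e : PSW FW m = liftg Pfw l0).
  { apply PSW_eq. split.
    - change (StronglySorted (fun a b : sig Pfw => lex (proj1_sig a) (proj1_sig b)) (liftg Pfw l0)).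
      apply SS_map. rewrite liftg_map. apply SS_filter, SS_filter, raw_SS, PSW_sp.
    - intro x. change (iw_idx FW x) with (projT1 (rawletter (proj1_sig x))). split.
      + intro h. apply (@liftg_in _ Pfw l0 x) in h. unfold l0 in h. apply filter_In in h as [_ h].
        apply Nat.ltb_lt in h. exact h.
      + intro h. apply (@liftg_in _ Pfw l0 x). unfold l0. apply filter_In. split; [|apply Nat.ltb_lt; exact h].
        apply raw_in; [apply proj2_sig|].
        apply PSW_in. eapply hM; [apply rawidx_supp, proj2_sig|exact h]. }
  unfold LW. rewrite e.
  transitivity (map rawletter (map (@proj1_sig _ _) (liftg Pfw l0))).
  { rewrite map_map. apply map_ext. intros [x hx]. cbn. apply eq_sym, letter_eta. }
  rewrite liftg_map, filter_true.
  2:{ intros x hx. apply bdecT. unfold l0 in hx. apply filter_In in hx as [hx _].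
      unfold raw in hx. apply in_flat_map in hx as [p [_ hx]]. apply in_map_iff in hx as [k [<- hk]].
      apply in_seq in hk. unfold Pfw; cbn. lia. }
  unfold l0, LW. rewrite <- rawletter_raw. unfold filt. rewrite filter_map_swap. reflexivity.
Qed.
End FW.


Section Main.
Variables (G H : nat -> group) (P : nat -> list nat) (phi : forall n, G n -> list (letter H)).
Hypothesis hP : finite_partition P.
Hypothesis hphi : forall n, @inj_hom_to_fp (G n) H (fun i => In i (P n)) (phi n).

Notation f := (FW phi hP hphi).
Notation Psi := (Psi phi).

Lemma B1 N : exists N', forall n i, n < N -> In i (P n) -> i < N'.
Proof.
  induction N as [|N [N' h]].
  - exists 0. intros; lia.
  - exists (N' + S (list_max (P N))). intros n i hn hi.
    destruct (Nat.eq_dec n N) as [->|ne]; [|specialize (h n i ltac:(lia) hi); lia].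
    pose proof (proj1 (list_max_le (P N) _) (le_n _)) as hf. rewrite Forall_forall in hf.
    specialize (hf i hi). lia.
Qed.
Lemma B2 m : exists M, forall n i, In i (P n) -> i < m -> n < M.
Proof.
  induction m as [|m [M h]].
  - exists 0. intros; lia.
  - destruct hP as [_ hu]. destruct (hu m) as [n0 [h0 _]]. exists (M + S n0). intros n i hi him.
    destruct (Nat.eq_dec i m) as [->|ne].
    + rewrite (part_uniq hP m n n0 hi h0). lia.
    + specialize (h n i hi ltac:(lia)). lia.
Qed.

Lemma arch_of_LW (X Y : iword H) : (forall m, LW X m = LW Y m) -> arch_eq X Y.
Proof.
  intro e. unfold arch_eq. apply (@triv_ncl _ 0). intro m.
  rewrite filt_all by (intros; reflexivity).
  rewrite LW_cat, LW_inv, e. apply fp_cancel_r, LW_lt.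
Qed.

Lemma f_hom w w' : arch_eq (f (iw_cat w w')) (iw_cat (f w) (f w')).
Proof.
  apply arch_of_LW. intro m. destruct (B2 m) as [M hM].
  rewrite LW_cat, !(LW_FW phi hP hphi _ hM), LW_cat, Psi_app, filt_app. reflexivity.
Qed.

Lemma filt_Psi_drop (q r : nat -> bool) s :
  (forall n i, In i (P n) -> r n = false -> q i = false) ->
  filt q (Psi s) = filt q (Psi (filt r s)).
Proof.
  intro h. induction s as [|x s IH]; [reflexivity|].
  change (Psi (x :: s)) with (psi phi x ++ Psi s).
  change (filt r (x :: s)) with (if r (projT1 x) then x :: filt r s else filt r s).
  destruct (r (projT1 x)) eqn:e.
  - change (Psi (x :: filt r s)) with (psi phi x ++ Psi (filt r s)). rewrite !filt_app, IH. reflexivity.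
  - rewrite filt_app, IH. rewrite filt_none; [reflexivity|]. intros y hy.
    pose proof (psi_supp G P phi hphi x) as hs. rewrite Forall_forall in hs. eapply h; eauto.
Qed.

Lemma f_resp w w' : arch_eq w w' -> arch_eq (f w) (f w').
Proof.
  unfold arch_eq. intro h. apply ncl_triv in h as [N hN]. destruct (B1 N) as [N' hN'].
  apply (@triv_ncl _ N'). intro m. destruct (B2 m) as [M hM].
  rewrite LW_cat, LW_inv, !(LW_FW phi hP hphi _ hM).
  specialize (hN M). rewrite LW_cat, LW_inv, filt_app, filt_winv in hN.
  set (a := LW w M) in *. set (b := LW w' M) in *.
  rewrite filt_app, filt_winv, !filt_filt.
  set (q := fun n => qge N' n && (n <? m)).
  assert (hq : forall n i, In i (P n) -> qge N n = false -> q i = false).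
  { intros n i hi hn. unfold q, qge in *. apply Nat.leb_gt in hn. specialize (hN' n i hn hi).
    apply andb_false_iff. left. apply Nat.leb_gt. exact hN'. }
  rewrite (filt_Psi_drop q (qge N) a hq), (filt_Psi_drop q (qge N) b hq).
  apply fp_mono with (S := fun n => TT n /\ q n = true).
  { intros n [_ hn]. unfold q in hn. apply andb_true_iff in hn as [_ hn]. apply Nat.ltb_lt, hn. }
  apply fp_trans with (filt q (Psi (filt (qge N) a ++ winv (filt (qge N) b)))).
  - rewrite Psi_app, filt_app. apply fp_app; [apply fp_refl|]. rewrite <- filt_winv.
    apply fp_filt. apply fp_sym, (Psi_winv P phi hphi).
  - pose proof (fp_filt q (Psi_fp P phi hphi hN)) as h. exact h.
Qed.

Lemma f_inj w w' : arch_eq (f w) (f w') -> arch_eq w w'.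
Proof.
  unfold arch_eq. intro h. apply ncl_triv in h as [N' hN']. destruct (B2 N') as [N hN].
  apply (@triv_ncl _ N). intro m.
  destruct (B1 m) as [m' hm']. destruct (B2 m') as [M0 hM0].
  assert (hM : forall n i, In i (P n) -> i < m' -> n < M0 + m) by (intros n i h1 h2; specialize (hM0 n i h1 h2); lia).
  specialize (hN' m'). rewrite LW_cat, LW_inv, !(LW_FW phi hP hphi _ hM), filt_app, filt_winv, !filt_filt in hN'.
  set (a := LW w (M0 + m)) in *. set (b := LW w' (M0 + m)) in *.
  set (qq := fun i => bdec (exists n, N <= n < m /\ In i (P n))).
  set (q' := fun n => qge N n && (n <? m)).
  assert (hqq : forall n i, In i (P n) -> qq i = q' n).
  { intros n i hi. unfold qq, q', qge. destruct (bdec _) eqn:e; symmetry.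
    - apply bdecT in e as [n' [hn' hi']]. rewrite (part_uniq hP i n n' hi hi').
      apply andb_true_iff. split; [apply Nat.leb_le|apply Nat.ltb_lt]; lia.
    - apply bdecF in e. apply andb_false_iff.
      destruct (le_lt_dec N n); [|left; apply Nat.leb_gt; lia].
      destruct (lt_dec n m); [|right; apply Nat.ltb_ge; lia].
      exfalso. apply e. exists n. split; [lia|auto]. }
  assert (hsub : forall i, qq i = true -> (qge N' i && (i <? m')) = true).
  { intros i hi. unfold qq in hi. apply bdecT in hi as [n [hn hi]]. apply andb_true_iff. split.
    - unfold qge. apply Nat.leb_le. destruct (le_lt_dec N' i); auto. specialize (hN n i hi l). lia.
    - apply Nat.ltb_lt. apply (hm' n); auto; lia. }
  pose proof (fp_filt qq hN') as h1. rewrite filt_app, filt_winv, !filt_filt in h1.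
  assert (hx : forall s : list (letter H), filt (fun n => qq n && (qge N' n && (n <? m'))) s = filt qq s).
  { intro s. apply filt_ext. intros x _. destruct (qq (projT1 x)) eqn:e; cbn; auto. }
  rewrite !hx, !(filt_Psi P phi hphi qq q' _ hqq) in h1.
  assert (ha : forall (u : iword G), filt q' (LW u (M0 + m)) = filt (qge N) (LW u m)).
  { intro u. rewrite (LW_mono u (m := m) (M := M0 + m)) by lia. rewrite filt_filt. reflexivity. }
  unfold a, b in h1. rewrite !ha in h1.
  rewrite LW_cat, LW_inv, filt_app, filt_winv.
  apply (Psi_inj G phi hP hphi (fun n => n < m) (T := TT)).
  - apply Forall_app. split.
    + apply Forall_filt_lt, LW_lt.
    + apply (Forall_winv (fun n => n < m)). apply Forall_filt_lt, LW_lt.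
  - rewrite Psi_app. eapply fp_trans.
    + apply fp_app; [apply fp_refl|apply (Psi_winv P phi hphi)].
    + eapply fp_mono; [|exact h1]. unfold TT; auto.
Qed.

End Main.

Theorem proposition19 (G H : nat -> group) (P : nat -> list nat) :
  finite_partition P ->
  (forall n, exists phi : G n -> list (letter H),
      @inj_hom_to_fp (G n) H (fun i => In i (P n)) phi) ->
  arch_embeds G H.
Proof.
  intros hP hex.
  set (phi := fun n => proj1_sig (constructive_indefinite_description _ (hex n))).
  assert (hphi : forall n, @inj_hom_to_fp (G n) H (fun i => In i (P n)) (phi n)).
  { intro n. unfold phi. destruct (constructive_indefinite_description _ _); auto. }
  exists (FW phi hP hphi). split; [|split].
  - apply f_resp.
  - apply f_hom.
  - apply f_inj.
Qed.
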